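(* Let $\mathcal G$ be an ample groupoid, $\mathcal B$ a base of the topology of $\mathcal G$ consisting of compact open bisections, and $S$ an additively idempotent commutative semiring (i.e. $s+s=s$ for all $s\in S$). Then $A_S(\mathcal G)=\operatorname{Span}_S\{1_U : U \text{ compact open in } \mathcal G\}=\operatorname{Span}_S\{1_B : B\in\mathcal B\}$. If moreover $S=\mathbb B$ is the Boolean semifield, then $A_{\mathbb B}(\mathcal G)=\{1_U: U \text{ a compact open subset of } \mathcal G\}$.
   Context: A semiring is a set with commutative monoid addition (neutral element $0$), associative multiplication with identity $1$, distributive laws and $0$ absorbing. The Boolean semifield is $\mathbb B=(\{0,1\},\text{or},\text{and})$. An ample groupoid is a topological groupoid whose unit space $\mathcal G^{(0)}$ is locally compact Hausdorff and totally disconnected and whose source and range maps $s,r$ are local homeomorphisms ($\mathcal G$ need not be Hausdorff). A bisection is a subset on which $s$ and $r$ restrict to homeomorphisms onto their images. $1_U$ is the $S$-valued characteristic function of $U$. The Steinberg algebra $A_S(\mathcal G)$ is the set of functions $\mathcal G\to S$ of the form $\sum_{U\in F}s_U1_U$ with $F$ a finite set of compact open bisections and $s_U\in S$, with pointwise addition and convolution $(f*g)(\gamma)=\sum_{\alpha\beta=\gamma} f(\alpha)g(\beta)$. $\operatorname{Span}_S$ denotes the set of finite $S$-linear combinations. *)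

(* Defs.v *)
From HB Require Import structures.
From mathcomp Require Import all_boot all_order all_algebra.
From mathcomp Require Import boolp classical_sets topology.
Set Implicit Arguments. Unset Strict Implicit. Unset Printing Implicit Defensive.
Import GRing.Theory.
Local Open Scope classical_set_scope.
Local Open Scope ring_scope.

(* Groupoids: a (small) groupoid on the carrier G, with source s,      *)
(* range r, multiplication mul (meaningful on composable pairs,        *)
(* i.e. s x = r y) and inverse inv.  Units are the fixed points of s.  *)
Record groupoid (G : Type) := Groupoid {
  gsrc : G -> G;
  grng : G -> G;
  gmul : G -> G -> G;
  ginv : G -> G;
  gsrc_rng : forall x, gsrc (grng x) = grng x;
  grng_src : forall x, grng (gsrc x) = gsrc x;
  gsrc_mul : forall x y, gsrc x = grng y -> gsrc (gmul x y) = gsrc y;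
  grng_mul : forall x y, gsrc x = grng y -> grng (gmul x y) = grng x;
  gmulA : forall x y z, gsrc x = grng y -> gsrc y = grng z ->
            gmul (gmul x y) z = gmul x (gmul y z);
  gmul_rng : forall x, gmul (grng x) x = x;
  gmul_src : forall x, gmul x (gsrc x) = x;
  gsrc_inv : forall x, gsrc (ginv x) = grng x;
  grng_inv : forall x, grng (ginv x) = gsrc x;
  gmulVx : forall x, gmul (ginv x) x = gsrc x;
  gmulxV : forall x, gmul x (ginv x) = grng x
}.

Section Ample.
Variable (G : topologicalType) (g : groupoid G).

Definition unit_space : set G := [set x | gsrc g x = x].

Definition rel_open (A V : set G) : Prop :=
  exists W : set G, open W /\ V = W `&` A.

(* f : G -> G is a local homeomorphism onto the unit space (with its
   subspace topology): f is continuous with values in G^(0), and every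
   point has an open neighbourhood U such that f is injective on U,
   f(U) is open in G^(0), and f|_U : U -> f(U) is open (so its inverse is
   continuous). *)
Definition local_homeo_to_units (f : G -> G) : Prop :=
  continuous f /\ (forall x, unit_space (f x)) /\
  forall x, exists U : set G,
    [/\ open U, U x, {in U &, injective f}, rel_open unit_space (f @` U) &
        forall V, open V -> V `<=` U -> rel_open unit_space (f @` V)].

Definition ample_groupoid : Prop :=
  {within [set p : G * G | gsrc g p.1 = grng g p.2],
     continuous (fun p : G * G => gmul g p.1 p.2)} /\
  continuous (ginv g) /\
  (forall x y, unit_space x -> unit_space y -> x <> y ->
     exists U V : set G, [/\ open U, open V, U x, V y &
        U `&` V `&` unit_space = set0]) /\
  (forall x, unit_space x -> exists U K : set G,
     [/\ open U, U x, compact K, K `<=` unit_space & U `&` unit_space `<=` K]) /\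
  totally_disconnected unit_space /\
  local_homeo_to_units (gsrc g) /\ local_homeo_to_units (grng g).

Definition homeo_onto_image (f : G -> G) (U : set G) : Prop :=
  [/\ {in U &, injective f}, {within U, continuous f} &
      forall V, rel_open U V -> rel_open (f @` U) (f @` V)].

Definition bisection (U : set G) : Prop :=
  homeo_onto_image (gsrc g) U /\ homeo_onto_image (grng g) U.

Definition cpt_open (U : set G) : Prop := compact U /\ open U.

Definition topo_base (B : set (set G)) : Prop :=
  (forall b, B b -> open b) /\
  forall W x, open W -> W x -> exists2 b, B b & b x /\ b `<=` W.

Variable S : pzSemiRingType.

Definition charf (U : set G) : G -> S := fun x => if `[< U x >] then 1 else 0.

Definition span_char (F : set (set G)) : set (G -> S) :=
  [set f | exists l : seq (S * set G), (forall p, p \in l -> F p.2) /\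
             f = fun x => \sum_(p <- l) p.1 * charf p.2 x].


Definition steinberg : set (G -> S) :=
  span_char [set U | cpt_open U /\ bisection U].

End Ample.

Definition boolsr : Type := bool.
HB.instance Definition _ := Choice.copy boolsr bool.
Lemma boolsr_addA : associative (orb : boolsr -> boolsr -> boolsr).
Proof. by move=> [] [] []. Qed.
Lemma boolsr_addC : commutative (orb : boolsr -> boolsr -> boolsr).
Proof. by move=> [] []. Qed.
Lemma boolsr_add0 : left_id (false : boolsr) orb.
Proof. by move=> []. Qed.
HB.instance Definition _ :=
  GRing.isNmodule.Build boolsr boolsr_addA boolsr_addC boolsr_add0.
Lemma boolsr_mulA : associative (andb : boolsr -> boolsr -> boolsr).
Proof. by move=> [] [] []. Qed.
Lemma boolsr_mulC : commutative (andb : boolsr -> boolsr -> boolsr).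
Proof. by move=> [] []. Qed.
Lemma boolsr_mul1 : left_id (true : boolsr) andb.
Proof. by move=> []. Qed.
Lemma boolsr_mulDl : left_distributive (andb : boolsr -> boolsr -> boolsr) (@GRing.add boolsr).
Proof. by move=> [] [] []. Qed.
Lemma boolsr_mul0 : left_zero (GRing.zero : boolsr) andb.
Proof. by move=> []. Qed.
Lemma boolsr_10 : (true : boolsr) != GRing.zero.
Proof. by []. Qed.
HB.instance Definition _ := GRing.Nmodule_isComNzSemiRing.Build boolsr
  boolsr_mulA boolsr_mulC boolsr_mul1 boolsr_mulDl boolsr_mul0 boolsr_10.

Arguments charf {G} S U _.
Arguments span_char {G} S F _.
Arguments steinberg {G} g S _.

(* Main.v *)
Require Import Defs.
From HB Require Import structures.
From mathcomp Require Import all_boot all_order all_algebra.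
From mathcomp Require Import boolp classical_sets topology.
From mathcomp Require Import finmap.
Import GRing.Theory.
Local Open Scope classical_set_scope.
Local Open Scope ring_scope.

Section PtSec. Variable (G : topologicalType) (x0 : G).
Definition PG : Type := G.
HB.instance Definition _ := Topological.copy PG G.
HB.instance Definition _ := isPointed.Build PG x0.
Lemma cc (U : set G) : compact U -> cover_compact U.
Proof. move=> cU. have : @compact PG U by []. rewrite compact_cover. by []. Qed.
End PtSec.

Section Aux.
Variable G : topologicalType.

Lemma decomp (B : set (set G)) (U : set G) : topo_base B -> cpt_open U ->
  exists l : seq (set G), (forall b, b \in l -> B b) /\
    (forall x, U x <-> exists2 b, b \in l & b x).
Proof.
move=> [Bop Bbase] [cU oU].
have [[x0 _]|U0] := pselect (exists x, U x); last first.
  exists [::]; split=> // x; split=> [Ux|[b]]; last by rewrite in_nil.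
  by case: U0; exists x.
have {}cU := @cc G x0 U cU.
have [D' sub cov] := cU (set G) [set b | B b /\ b `<=` U] id
  (fun b Db => Bop b (proj1 Db))
  (fun x Ux => let: ex_intro2 b Bb (conj bx bU) := Bbase U x oU Ux in
     ex_intro2 _ _ b (conj Bb bU) bx).
exists (enum_fset D'); split.
  by move=> b bD; have /set_mem [] := sub b bD.
move=> x; split.
  by move=> /cov [b bD bx]; exists b.
by move=> [b bD bx]; have /set_mem [_ bU] := sub b bD; exact: bU.
Qed.

Lemma sum_charf (S : pzSemiRingType) (idem : forall x : S, x + x = x)
  (l : seq (set G)) x :
  \sum_(b <- l) charf S b x = if `[< exists2 b, b \in l & b x >] then 1 else 0.
Proof.
elim: l => [|b l IH].
  rewrite big_nil; case: asboolP => // [[b]]; by rewrite in_nil.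
rewrite big_cons IH /charf.
have -> : `[< exists2 b0, b0 \in b :: l & b0 x >] =
   `[< b x >] || `[< exists2 b0, b0 \in l & b0 x >].
  apply/asboolP/orP.
    move=> [b0]; rewrite in_cons => /orP [/eqP -> b0x|b0l b0x].
      by left; apply/asboolP.
    by right; apply/asboolP; exists b0.
  case=> /asboolP.
    by move=> bx; exists b; rewrite ?mem_head.
  by move=> [b0 b0l b0x]; exists b0 => //; rewrite in_cons b0l orbT.
by case: asboolP => _; case: asboolP => _ /=; rewrite ?idem ?addr0 ?add0r.
Qed.


Lemma charf_dec {S : pzSemiRingType} (idem : forall x : S, x + x = x)
  {U : set G} {l : seq (set G)} :
  (forall x, U x <-> exists2 b, b \in l & b x) ->
  forall x, charf S U x = \sum_(b <- l) charf S b x.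
Proof.
move=> hd x; rewrite sum_charf // /charf.
by rewrite (propext (hd x)).
Qed.

Lemma span_sub (S : pzSemiRingType) (F1 F2 : set (set G)) :
  F1 `<=` F2 -> span_char S F1 `<=` span_char S F2.
Proof. by move=> sF f [l [hl ->]]; exists l; split=> // p /hl /sF. Qed.

Lemma cpt_to_B (S : pzSemiRingType) (idem : forall x : S, x + x = x)
  (B : set (set G)) : topo_base B ->
  span_char S (@cpt_open G) `<=` span_char S B.
Proof.
move=> hB f [l [hl ->]].
suff [l' [hl' e]] : exists l' : seq (S * set G), (forall p, p \in l' -> B p.2) /\
  forall x, \sum_(p <- l) p.1 * charf S p.2 x = \sum_(p <- l') p.1 * charf S p.2 x.
  by exists l'; split=> //; apply: funext => x; exact: e.
elim: l hl => [|[s U] l IH] hl.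
  by exists [::]; split=> // x; rewrite !big_nil.
have [|l' [hl' e]] := IH.
  by move=> p pl; apply: hl; rewrite in_cons pl orbT.
have [lb [hlb hd]] := @decomp B U hB (hl (s, U) (mem_head _ _)).
exists ([seq (s, b) | b <- lb] ++ l'); split.
  move=> p; rewrite mem_cat => /orP [/mapP [b bl ->]|]; first exact: hlb.
  exact: hl'.
move=> x; rewrite big_cons big_cat big_map /= e (charf_dec idem hd x) mulr_sumr.
by [].
Qed.

Lemma bool_sub (g : groupoid G) :
  steinberg g boolsr `<=` [set charf boolsr U | U in @cpt_open G].
Proof.
move=> f [l [hl ->]].
suff [U [cU e]] : exists U, cpt_open U /\
  forall x, \sum_(p <- l) p.1 * charf boolsr p.2 x = charf boolsr U x.
  by exists U => //; apply: funext => x; rewrite e.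
elim: l hl => [|[s V] l IH] hl.
  exists set0; split; first by split; [exact: compact0 | exact: open0].
  by move=> x; rewrite big_nil /charf asboolF.
have [|U [[cU oU] e]] := IH.
  by move=> p pl; apply: hl; rewrite in_cons pl orbT.
have [[cV oV] _] := hl (s, V) (mem_head _ _).
move: cV oV => /= cV oV; clear hl IH; case: s.
  exists (V `|` U); split; first by split; [exact: compactU | exact: openU].
  move=> x; rewrite big_cons e /charf /=.
  case: (asboolP (V x)) => Vx; case: (asboolP (U x)) => Ux;
    case: asboolP => H; (try by []); (try by exfalso; apply: H; first [by left | by right]); by case: H.
exists U; split=> // x; rewrite big_cons e /=.
by rewrite mul0r add0r.
Qed.

Lemma bool_sup (g : groupoid G) (B : set (set G)) : topo_base B ->
  (forall b, B b -> cpt_open b /\ bisection g b) ->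
  [set charf boolsr U | U in @cpt_open G] `<=` steinberg g boolsr.
Proof.
move=> hB hBc f [U cU <-].
have [lb [hlb hd]] := @decomp B U hB cU.
exists [seq (1, b) | b <- lb]; split.
  by move=> p /mapP [b bl ->]; apply: hBc; apply: hlb.
apply: funext => x; rewrite big_map (charf_dec _ hd x); last by case.
by apply: eq_bigr => b _; rewrite mul1r.
Qed.
End Aux.

Theorem lemma2p3 (G : topologicalType) (g : groupoid G) (B : set (set G)) :
  ample_groupoid g ->
  topo_base B ->
  (forall b, B b -> cpt_open b /\ bisection g b) ->
  (forall (S : comPzSemiRingType), (forall x : S, x + x = x) ->
     steinberg g S = span_char S (@cpt_open G) /\
     span_char S (@cpt_open G) = span_char S B) /\
  steinberg g boolsr = [set charf boolsr U | U in @cpt_open G].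
Proof.
move=> _ hB hBc; split; last first.
  by rewrite eqEsubset; split; [exact: bool_sub | exact: bool_sup hB hBc].
move=> S idem.
have h1 : steinberg g S `<=` span_char S (@cpt_open G).
  by apply: span_sub => U [].
have h2 : span_char S (@cpt_open G) `<=` span_char S B by exact: cpt_to_B.
have h3 : span_char S B `<=` steinberg g S by exact: span_sub.
by rewrite !eqEsubset; split; split=> //; apply: subset_trans; eassumption.
Qed.
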